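(* Let $p$ be a complex polynomial of degree $m\ge1$ such that (1) $\mathbf1-p(L)$ is injective, (2) $p(L)^k\to0$ strongly as $k\to\infty$, and (3) every $z\in\mathbb C$ with $1-p(z)=0$ satisfies $|z|=1$. Let $\alpha_1,\dots,\alpha_m$ be the roots of $1-p(z)=0$ counted with multiplicity, and $X_p=\log(Y_p)-\log(Y_p^* )$ with $Y_p=\mathbf1-p(L)$. Then $\big[N,\frac imX_p\big]=-i\mathbf1$ on $\mathrm{ran}\big(\prod_{j=1}^m(\alpha_jL^*-\mathbf1)\big)\cap\mathrm D(X_pN)\cap\mathrm D(NX_p)$.
   Context: $\ell^2=\ell^2(\mathbb N)$, $\mathbb N=\{0,1,\dots\}$, basis $(\xi_n)$; $N\xi_n=n\xi_n$ (self-adjoint, maximal domain); $L$ left shift ($L\xi_n=\xi_{n-1}$, $L\xi_0=0$), $L^*$ right shift. For a linear operator $A$, $\mathrm D(\log A)=\{f\in\bigcap_{k\ge0}\mathrm D(A^k):\lim_K\sum_{k=1}^K\frac1k(\mathbf1-A)^kf\text{ exists}\}$, $\log Af=-\sum_{k\ge1}\frac1k(\mathbf1-A)^kf$; $X_p$ is defined on $\mathrm D(\log Y_p)\cap\mathrm D(\log Y_p^* )$. ''$[A,B]=C$ on $\mathcal D$'' means $\mathcal D\subset\mathrm D(AB)\cap\mathrm D(BA)$ and $(AB-BA)\varphi=C\varphi$ for $\varphi\in\mathcal D$. *)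

(* Defs.v *)
From Stdlib Require Import Reals ClassicalEpsilon.
From Coquelicot Require Import Coquelicot.
Open Scope R_scope.

Definition vec := nat -> C.

Definition in_l2 (f : vec) : Prop := ex_series (fun n => (Cmod (f n))^2).

Definition l2norm (f : vec) : R := sqrt (Series (fun n => (Cmod (f n))^2)).

Definition vzero : vec := fun _ => RtoC 0.
Definition vadd (f g : vec) : vec := fun n => Cplus (f n) (g n).
Definition vsub (f g : vec) : vec := fun n => Cminus (f n) (g n).
Definition vscal (a : C) (f : vec) : vec := fun n => Cmult a (f n).

Definition l2_lim (u : nat -> vec) (g : vec) : Prop :=
  in_l2 g /\ (forall K, in_l2 (u K)) /\
  is_lim_seq (fun K => l2norm (vsub (u K) g)) 0.

Definition inner_is (f g : vec) (s : C) : Prop :=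
  is_series (fun n => Cmult (f n) (Cconj (g n))) s.

Record op := Op { dom : vec -> Prop ; app : vec -> vec }.

Definition op_id : op := Op in_l2 (fun f => f).
Definition op_add (A B : op) : op :=
  Op (fun f => dom A f /\ dom B f) (fun f => vadd (app A f) (app B f)).
Definition op_sub (A B : op) : op :=
  Op (fun f => dom A f /\ dom B f) (fun f => vsub (app A f) (app B f)).
Definition op_scal (a : C) (A : op) : op := Op (dom A) (fun f => vscal a (app A f)).
Definition op_comp (A B : op) : op :=
  Op (fun f => dom B f /\ dom A (app B f)) (fun f => app A (app B f)).
Fixpoint op_pow (A : op) (k : nat) : op :=
  match k with O => op_id | S k' => op_comp A (op_pow A k') end.

Definition bnd_op (T : vec -> vec) : op := Op in_l2 T.

Definition opN : op :=
  Op (fun f => in_l2 f /\ in_l2 (fun n => Cmult (RtoC (INR n)) (f n)))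
     (fun f n => Cmult (RtoC (INR n)) (f n)).
Definition opL : op := bnd_op (fun f n => f (S n)).
Definition opLs : op := bnd_op (fun f n => match n with O => RtoC 0 | S n' => f n' end).

Definition log_partial (A : op) (f : vec) (K : nat) : vec :=
  fun n => sum_n (fun k => match k with
                          | O => RtoC 0
                          | S _ => Cmult (RtoC (/ INR k)) (app (op_pow (op_sub op_id A) k) f n)
                          end) K.

Definition log_dom (A : op) (f : vec) : Prop :=
  (forall k, dom (op_pow A k) f) /\ exists g, l2_lim (log_partial A f) g.

Definition log_val (A : op) (f : vec) : vec :=
  epsilon (inhabits vzero) (fun g => l2_lim (log_partial A f) g).

Definition op_log (A : op) : op :=
  Op (log_dom A) (fun f => vscal (RtoC (-1)) (log_val A f)).

Definition opX (Y Ys : op) : op := op_sub (op_log Y) (op_log Ys).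

Definition poly_eval (c : nat -> C) (m : nat) (z : C) : C :=
  sum_n (fun j => Cmult (c j) (pow_n z j)) m.

Definition poly_L (c : nat -> C) (m : nat) : op :=
  bnd_op (fun f n => sum_n (fun j => Cmult (c j) (app (op_pow opL j) f n)) m).

Definition is_adjoint (A B : op) : Prop :=
  forall f g, in_l2 f -> in_l2 g ->
    dom A f /\ dom B g /\ in_l2 (app A f) /\ in_l2 (app B g) /\
    exists s, inner_is (app A f) g s /\ inner_is f (app B g) s.

Fixpoint prod_op (alpha : nat -> C) (k : nat) : op :=
  match k with
  | O => op_id
  | S k' => op_comp (op_sub (op_scal (alpha k') opLs) op_id) (prod_op alpha k')
  end.

Definition ran (A : op) (g : vec) : Prop := exists f, dom A f /\ app A f = g.

Fixpoint cprod (u : nat -> C) (k : nat) : C :=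
  match k with O => RtoC 1 | S k' => Cmult (cprod u k') (u k') end.

Definition comm_on (A B Cop : op) (D : vec -> Prop) : Prop :=
  (forall f, D f -> dom (op_comp A B) f /\ dom (op_comp B A) f) /\
  (forall f, D f -> vsub (app (op_comp A B) f) (app (op_comp B A) f) = app Cop f).

(* Main.v *)
From Stdlib Require Import Reals ZArith Lia Lra List FunctionalExtensionality ClassicalEpsilon.
Require Import Defs.
From Stdlib Require Import Reals.
From Coquelicot Require Import Coquelicot.
Import ListNotations.
Open Scope C_scope.

Notation C0 := (RtoC 0).
Notation C1 := (RtoC 1).

Definition V := Z -> C.
Definition Vadd (x y : V) : V := fun j => x j + y j.
Definition Vscal (a : C) (x : V) : V := fun j => a * x j.
Definition V0 : V := fun _ => 0.
Definition Sh (x : V) : V := fun j => x (j + 1)%Z.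
Definition Shi (x : V) : V := fun j => x (j - 1)%Z.

Definition linT (T : V -> V) : Prop :=
  (forall x y, T (Vadd x y) = Vadd (T x) (T y)) /\
  (forall a x, T (Vscal a x) = Vscal a (T x)).

Lemma linT_Sh : linT Sh. Proof. split; reflexivity. Qed.
Lemma linT_Shi : linT Shi. Proof. split; reflexivity. Qed.

Lemma linT_0 T : linT T -> T V0 = V0.
Proof.
  intros [_ HS].
  replace V0 with (Vscal 0 V0) by (apply functional_extensionality; intro; unfold Vscal, V0; ring).
  rewrite HS. apply functional_extensionality; intro; unfold Vscal, V0; ring.
Qed.

Fixpoint ope (T : V -> V) (a : list C) (x : V) : V :=
  match a with
  | nil => V0
  | c0 :: a' => fun j => c0 * x j + T (ope T a' x) j
  end.

Lemma ope_add T a x y : linT T -> ope T a (Vadd x y) = Vadd (ope T a x) (ope T a y).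
Proof.
  intros HT. induction a as [|c0 a IH]; simpl.
  - apply functional_extensionality; intro; unfold V0, Vadd; ring.
  - rewrite IH. destruct HT as [HA _]. rewrite HA.
    apply functional_extensionality; intro; unfold Vadd; ring.
Qed.

Lemma ope_scal T a k x : linT T -> ope T a (Vscal k x) = Vscal k (ope T a x).
Proof.
  intros HT. induction a as [|c0 a IH]; simpl.
  - apply functional_extensionality; intro; unfold V0, Vscal; ring.
  - rewrite IH. destruct HT as [_ HS]. rewrite HS.
    apply functional_extensionality; intro; unfold Vscal; ring.
Qed.

Lemma ope_commU T U a x : linT U -> (forall y, U (T y) = T (U y)) ->
  U (ope T a x) = ope T a (U x).
Proof.
  intros HU HUT. induction a as [|c0 a IH]; simpl.
  - apply linT_0; auto.
  - destruct HU as [HA HS].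
    change (fun j => c0 * x j + T (ope T a x) j) with (Vadd (Vscal c0 x) (T (ope T a x))).
    rewrite HA, HS, HUT, IH. reflexivity.
Qed.

Lemma ope_T T a x : linT T -> T (ope T a x) = ope T a (T x).
Proof. intros HT. apply ope_commU; auto. Qed.

Lemma linT_ope T a : linT T -> linT (ope T a).
Proof. intros HT; split; intros; [apply ope_add|apply ope_scal]; auto. Qed.

Lemma ope_comm T a b x : linT T -> ope T a (ope T b x) = ope T b (ope T a x).
Proof.
  intros HT. apply ope_commU. apply linT_ope; auto.
  intros y. symmetry. apply ope_T; auto.
Qed.

Fixpoint padd (a b : list C) : list C :=
  match a, b with
  | nil, _ => b
  | _, nil => a
  | x :: a', y :: b' => (x + y) :: padd a' b'
  end.
Definition pscale (k : C) (a : list C) : list C := map (Cmult k) a.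
Fixpoint pmul (a b : list C) : list C :=
  match a with
  | nil => nil
  | x :: a' => padd (pscale x b) (C0 :: pmul a' b)
  end.
Fixpoint ppow (a : list C) (n : nat) : list C :=
  match n with O => [C1] | S n' => pmul a (ppow a n') end.
Fixpoint peval (a : list C) (z : C) : C :=
  match a with nil => 0 | x :: a' => x + z * peval a' z end.

Lemma ope_padd T a b x : linT T -> ope T (padd a b) x = Vadd (ope T a x) (ope T b x).
Proof.
  intros HT. revert b; induction a as [|c0 a IH]; intros b; simpl.
  - apply functional_extensionality; intro; unfold V0, Vadd; ring.
  - destruct b as [|d0 b]; simpl.
    + apply functional_extensionality; intro; unfold V0, Vadd; ring.
    + rewrite IH. destruct HT as [HA _]. rewrite HA.
      apply functional_extensionality; intro; unfold Vadd; ring.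
Qed.

Lemma ope_pscale T k a x : linT T -> ope T (pscale k a) x = Vscal k (ope T a x).
Proof.
  intros HT. induction a as [|c0 a IH]; simpl.
  - apply functional_extensionality; intro; unfold V0, Vscal; ring.
  - fold (pscale k a). rewrite IH. destruct HT as [_ HS]. rewrite HS.
    apply functional_extensionality; intro; unfold Vscal; ring.
Qed.

Lemma ope_pmul T a b x : linT T -> ope T (pmul a b) x = ope T a (ope T b x).
Proof.
  intros HT. induction a as [|c0 a IH]; simpl. reflexivity.
  rewrite ope_padd, ope_pscale by auto. simpl. rewrite IH.
  apply functional_extensionality; intro; unfold Vadd, Vscal, V0; ring.
Qed.

Lemma ope_ppow T a n x : linT T -> ope T (ppow a n) x = Nat.iter n (ope T a) x.
Proof.
  intros HT. induction n as [|n IH]; simpl.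
  - rewrite linT_0 by auto. apply functional_extensionality; intro; unfold V0; ring.
  - rewrite ope_pmul, IH by auto. reflexivity.
Qed.

Lemma ope_zero T b x : linT T -> (forall i, nth i b C0 = 0) -> ope T b x = V0.
Proof.
  intros HT. induction b as [|d b IH]; intros Hb; simpl. reflexivity.
  rewrite IH. rewrite linT_0 by auto. specialize (Hb O). simpl in Hb. subst.
  apply functional_extensionality; intro; unfold V0; ring.
  intros i; apply (Hb (S i)).
Qed.

Lemma ope_coeq T a b x : linT T -> (forall i, nth i a C0 = nth i b C0) -> ope T a x = ope T b x.
Proof.
  intros HT. revert b; induction a as [|c0 a IH]; intros b' Hab.
  - symmetry; apply ope_zero; auto. intros i; rewrite <- Hab; destruct i; reflexivity.
  - destruct b' as [|d b].
    + apply ope_zero; auto. intros i; rewrite Hab; destruct i; reflexivity.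
    + simpl. rewrite (IH b). pose proof (Hab O) as H0. simpl in H0. subst. reflexivity.
      intros i; apply (Hab (S i)).
Qed.

Lemma nth_padd a b i : nth i (padd a b) C0 = nth i a C0 + nth i b C0.
Proof.
  revert b i; induction a as [|x a IH]; intros b i; simpl.
  - destruct i; ring.
  - destruct b as [|y b]; destruct i; simpl; try ring; auto.
Qed.

Lemma nth_pscale k a i : nth i (pscale k a) C0 = k * nth i a C0.
Proof.
  revert i; induction a as [|x a IH]; intros i; simpl; destruct i; simpl; try ring; auto.
Qed.

Lemma peval_padd a b z : peval (padd a b) z = peval a z + peval b z.
Proof.
  revert b; induction a as [|x a IH]; intros b; simpl. ring.
  destruct b as [|y b]; simpl. ring. rewrite IH; ring.
Qed.

Lemma peval_pscale k a z : peval (pscale k a) z = k * peval a z.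
Proof. induction a as [|x a IH]; simpl. ring. fold (pscale k a). rewrite IH; ring. Qed.

Lemma peval_pmul a b z : peval (pmul a b) z = peval a z * peval b z.
Proof.
  induction a as [|x a IH]; simpl. ring.
  rewrite peval_padd, peval_pscale. simpl. rewrite IH. ring.
Qed.

Fixpoint sumabs (a : list C) : R :=
  match a with nil => 0%R | x :: a' => (Cmod x + sumabs a')%R end.

Lemma sumabs_ge0 a : (0 <= sumabs a)%R.
Proof. induction a; simpl. lra. pose proof (Cmod_ge_0 a). lra. Qed.

Lemma peval_bound a z : (Cmod z <= 1)%R -> (Cmod (peval a z) <= sumabs a)%R.
Proof.
  intros Hz. induction a as [|x a IH]; simpl.
  - rewrite Cmod_0. lra.
  - eapply Rle_trans. apply Cmod_triangle. rewrite Cmod_mult.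
    pose proof (Cmod_ge_0 z). pose proof (Cmod_ge_0 (peval a z)).
    assert (Cmod z * Cmod (peval a z) <= 1 * Cmod (peval a z))%R by (apply Rmult_le_compat_r; lra).
    lra.
Qed.

Lemma peval_extract a : (forall z : C, z <> C0 -> peval a z = 0) -> forall i, nth i a C0 = 0.
Proof.
  induction a as [|x a IH]; intros H i.
  - destruct i; reflexivity.
  - assert (Hx : x = 0).
    { destruct (Req_dec (Cmod x) 0) as [E|E]. apply Cmod_eq_0; auto.
      exfalso. pose proof (Cmod_ge_0 x) as Hx0. pose proof (sumabs_ge0 a). set (B := sumabs a) in *.
      assert (Hxp : (0 < Cmod x)%R) by (destruct Hx0; [auto| congruence]).
      set (t := Rmin 1 (Cmod x / (2 * (B + 1)))).
      assert (Ht0 : (0 < t)%R). { unfold t. apply Rmin_pos. lra. apply Rdiv_lt_0_compat; lra. }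
      assert (Ht1 : (t <= 1)%R) by apply Rmin_l.
      assert (Ht2 : (t <= Cmod x / (2 * (B + 1)))%R) by apply Rmin_r.
      assert (Hz : RtoC t <> 0). { intro E'. apply RtoC_inj in E'. lra. }
      specialize (H _ Hz). simpl in H.
      assert (Hxe : x = - (RtoC t * peval a t)) by (rewrite <- (Cplus_0_r (- _)); rewrite <- H; ring).
      assert (Cmod x <= t * B)%R.
      { rewrite Hxe, Cmod_opp, Cmod_mult, Cmod_R, Rabs_pos_eq by lra.
        apply Rmult_le_compat_l. lra. apply peval_bound. rewrite Cmod_R, Rabs_pos_eq; lra. }
      assert (t * B <= Cmod x / (2 * (B + 1)) * B)%R by (apply Rmult_le_compat_r; lra).
      assert (Cmod x / (2 * (B + 1)) * B < Cmod x)%R.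
      { unfold Rdiv. rewrite Rmult_assoc. rewrite <- (Rmult_1_r (Cmod x)) at 2.
        apply Rmult_lt_compat_l. lra. apply (Rmult_lt_reg_l (2 * (B + 1))). lra.
        field_simplify; lra. }
      lra. }
    destruct i as [|i]. simpl; auto.
    simpl. apply IH. intros z Hz. specialize (H z Hz). simpl in H. rewrite Hx in H.
    assert (z * peval a z = 0) by (rewrite <- H; ring).
    replace (peval a z) with (/ z * (z * peval a z)) by (field; auto). rewrite H0; ring.
Qed.

Lemma peval_coeq a b : (forall z : C, peval a z = peval b z) -> forall i, nth i a C0 = nth i b C0.
Proof.
  intros H i.
  assert (E := peval_extract (padd a (pscale (-1) b))).
  assert (forall z : C, z <> C0 -> peval (padd a (pscale (-1) b)) z = 0).
  { intros z _. rewrite peval_padd, peval_pscale, H. ring. }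
  specialize (E H0 i). rewrite nth_padd, nth_pscale in E.
  replace (nth i a C0) with ((nth i a C0 + -1 * nth i b C0) + nth i b C0) by ring.
  rewrite E; ring.
Qed.

Definition NZ (x : V) : V := fun j => RtoC (IZR j) * x j.
Definition Vsub (x y : V) : V := Vadd x (Vscal (-1) y).
Definition Comm (T : V -> V) (x : V) : V := Vsub (NZ (T x)) (T (NZ x)).

Fixpoint zd (a : list C) : list C :=
  match a with nil => nil | x :: a' => C0 :: padd a' (zd a') end.

Lemma IZR_succ j : RtoC (IZR (j + 1)) = RtoC (IZR j) + 1.
Proof. rewrite plus_IZR. rewrite RtoC_plus. reflexivity. Qed.
Lemma IZR_pred j : RtoC (IZR (j - 1)) = RtoC (IZR j) - 1.
Proof. rewrite minus_IZR. unfold Cminus. rewrite <- RtoC_opp, <- RtoC_plus. reflexivity. Qed.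

Lemma Sh_app y k : Sh y k = y (k+1)%Z. Proof. reflexivity. Qed.
Lemma Shi_app y k : Shi y k = y (k-1)%Z. Proof. reflexivity. Qed.

Lemma comm_ope_Sh a x : Comm (ope Sh a) x = Vscal (-1) (ope Sh (zd a) x).
Proof.
  revert x. induction a as [|c0 a IH]; intros x; apply functional_extensionality; intro j.
  - simpl; unfold Comm, Vsub, Vadd, Vscal, NZ, V0; simpl. ring.
  - simpl. rewrite ope_padd by apply linT_Sh.
    pose proof (equal_f (IH x) (j+1)%Z) as Hj.
    unfold Comm, Vsub, Vadd, Vscal, NZ in *; simpl in *. rewrite ?Sh_app.
    rewrite IZR_succ in Hj.
    replace (RtoC (IZR j) * (c0 * x j + ope Sh a x (j + 1)%Z) + -1 * (c0 * (RtoC (IZR j) * x j) + ope Sh a (fun j0 : Z => RtoC (IZR j0) * x j0) (j + 1)%Z))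
      with (((RtoC (IZR j) + 1) * ope Sh a x (j + 1)%Z + -1 * ope Sh a (fun j0 : Z => RtoC (IZR j0) * x j0) (j + 1)%Z) - ope Sh a x (j+1)%Z) by ring.
    rewrite Hj. ring.
Qed.

Lemma comm_ope_Shi a x : Comm (ope Shi a) x = ope Shi (zd a) x.
Proof.
  revert x. induction a as [|c0 a IH]; intros x; apply functional_extensionality; intro j.
  - simpl; unfold Comm, Vsub, Vadd, Vscal, NZ, V0; simpl. ring.
  - simpl. rewrite ope_padd by apply linT_Shi.
    pose proof (equal_f (IH x) (j-1)%Z) as Hj.
    unfold Comm, Vsub, Vadd, Vscal, NZ in *; simpl in *. rewrite ?Shi_app.
    rewrite IZR_pred in Hj.
    replace (RtoC (IZR j) * (c0 * x j + ope Shi a x (j - 1)%Z) + -1 * (c0 * (RtoC (IZR j) * x j) + ope Shi a (fun j0 : Z => RtoC (IZR j0) * x j0) (j - 1)%Z))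
      with (((RtoC (IZR j) - 1) * ope Shi a x (j - 1)%Z + -1 * ope Shi a (fun j0 : Z => RtoC (IZR j0) * x j0) (j - 1)%Z) + ope Shi a x (j-1)%Z) by ring.
    rewrite Hj. ring.
Qed.

Lemma comm_comp T U x : linT T -> Comm (fun y => T (U y)) x = Vadd (Comm T (U x)) (T (Comm U x)).
Proof.
  intros [HA HS]. unfold Comm, Vsub. rewrite HA, HS.
  apply functional_extensionality; intro j; unfold Vadd, Vscal; ring.
Qed.

Lemma linT_iter (P : V -> V) k : linT P -> linT (Nat.iter k P).
Proof.
  intros [HA HS]. induction k as [|k [IA IS]]; split; intros.
  - reflexivity.
  - reflexivity.
  - change (P (Nat.iter k P (Vadd x y)) = Vadd (P (Nat.iter k P x)) (P (Nat.iter k P y))).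
    rewrite IA, HA; auto.
  - change (P (Nat.iter k P (Vscal a x)) = Vscal a (P (Nat.iter k P x))).
    rewrite IS, HS; auto.
Qed.

Lemma iter_comm (P R : V -> V) k x : (forall y, R (P y) = P (R y)) -> R (Nat.iter k P x) = Nat.iter k P (R x).
Proof. intros H. induction k; simpl; auto. rewrite H, IHk; auto. Qed.

Lemma comm_iter (P R : V -> V) (s : C) k x : linT P -> linT R -> (forall y, R (P y) = P (R y)) ->
  (forall y, Comm P y = Vscal s (R y)) ->
  Comm (Nat.iter (S k) P) x = Vscal (s * RtoC (INR (S k))) (R (Nat.iter k P x)).
Proof.
  intros HP HR HRP HC. induction k as [|k IH].
  - simpl. change (Nat.iter 0 P x) with x. rewrite HC.
    apply functional_extensionality; intro j; unfold Vscal; simpl. ring.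
  - change (Comm (fun y => P (Nat.iter (S k) P y)) x = Vscal (s * RtoC (INR (S (S k)))) (R (Nat.iter (S k) P x))).
    rewrite comm_comp by auto. rewrite IH, HC.
    destruct HP as [_ HS]. rewrite HS. rewrite <- HRP.
    change (P (Nat.iter k P x)) with (Nat.iter (S k) P x).
    apply functional_extensionality; intro j; unfold Vadd, Vscal.
    rewrite (S_INR (S k)). rewrite RtoC_plus. ring.
Qed.

Definition ShiN (d : nat) (x : V) : V := fun j => x (j - Z.of_nat d)%Z.
Lemma linT_ShiN d : linT (ShiN d). Proof. split; reflexivity. Qed.
Lemma ShiN_Sh d y : ShiN d (Sh y) = Sh (ShiN d y).
Proof. apply functional_extensionality; intro j; unfold ShiN, Sh. f_equal; lia. Qed.
Lemma ShiN_Shi d y : ShiN d (Shi y) = Shi (ShiN d y).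
Proof. apply functional_extensionality; intro j; unfold ShiN, Shi. f_equal; lia. Qed.

Lemma NZ_ShiN d y : NZ (ShiN d y) = Vadd (ShiN d (NZ y)) (Vscal (RtoC (INR d)) (ShiN d y)).
Proof.
  apply functional_extensionality; intro j; unfold NZ, ShiN, Vadd, Vscal.
  rewrite minus_IZR, <- INR_IZR_INZ. unfold Rminus. rewrite RtoC_plus, RtoC_opp. ring.
Qed.

Lemma Shi_ShiN d y : Shi (ShiN d y) = ShiN (S d) y.
Proof. apply functional_extensionality; intro j; unfold ShiN, Shi. f_equal; lia. Qed.
Lemma ShiN_S d y : ShiN (S d) (Sh y) = ShiN d y.
Proof. apply functional_extensionality; intro j; unfold ShiN, Sh. f_equal; lia. Qed.
Lemma ShiN_0 y : ShiN 0 y = y.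
Proof. apply functional_extensionality; intro j; unfold ShiN. f_equal; lia. Qed.

Fixpoint fsum (f : nat -> C) (n : nat) : C :=
  match n with O => 0 | S n' => fsum f n' + f n' end.

Lemma fsum_front (f : nat -> C) n : fsum f (S n) = f O + fsum (fun i => f (S i)) n.
Proof. induction n; simpl in *. ring. rewrite IHn. ring. Qed.

Lemma fsum_ext (f g : nat -> C) n : (forall i, (i < n)%nat -> f i = g i) -> fsum f n = fsum g n.
Proof. induction n; intros H; simpl; auto. rewrite IHn, H; auto. Qed.

Lemma fsum_add (f g : nat -> C) n : fsum (fun i => f i + g i) n = fsum f n + fsum g n.
Proof. induction n; simpl. ring. rewrite IHn; ring. Qed.

Lemma fsum_scal (k : C) (f : nat -> C) n : fsum (fun i => k * f i) n = k * fsum f n.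
Proof. induction n; simpl. ring. rewrite IHn; ring. Qed.

Lemma fsum_zero (f : nat -> C) n : (forall i, f i = 0) -> fsum f n = 0.
Proof. intros H; induction n; simpl; auto. rewrite IHn, H; ring. Qed.

Lemma sum_n_fsum (f : nat -> C) n : sum_n f n = fsum f (S n).
Proof.
  induction n. rewrite sum_O. simpl. ring.
  rewrite sum_Sn, IHn. reflexivity.
Qed.

Definition En (n : Z) : V := fun j => if Z.eq_dec j n then C1 else C0.

Lemma Sh_En n : Sh (En n) = En (n - 1).
Proof.
  apply functional_extensionality; intro j; unfold Sh, En.
  destruct (Z.eq_dec (j+1) n), (Z.eq_dec j (n-1)); auto; lia.
Qed.

Lemma fsum_delta (G : V) n N : (n <= Z.of_nat N)%Z -> ((n < 0)%Z -> G n = C0) ->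
  fsum (fun j => En n (Z.of_nat j) * G (Z.of_nat j)) (S N) = G n.
Proof.
  intros HnN Hneg. induction N as [|N IH].
  - simpl. unfold En. destruct (Z.eq_dec 0 n).
    + subst. simpl. ring.
    + rewrite Hneg by lia. ring.
  - change (fsum (fun j => En n (Z.of_nat j) * G (Z.of_nat j)) (S N) + En n (Z.of_nat (S N)) * G (Z.of_nat (S N)) = G n).
    destruct (Z.eq_dec n (Z.of_nat (S N))) as [E|E].
    + rewrite (fsum_ext _ (fun _ => C0)).
      rewrite fsum_zero by auto. unfold En. rewrite E. destruct (Z.eq_dec _ _); [|lia]. ring.
      intros i Hi. unfold En. destruct (Z.eq_dec (Z.of_nat i) n); [lia|]. ring.
    + rewrite IH by lia. unfold En. destruct (Z.eq_dec (Z.of_nat (S N)) n); [lia|]. ring.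
Qed.

Definition suppnn (G : V) := forall j, (j < 0)%Z -> G j = C0.

Lemma ope_Shi_supp a G : suppnn G -> suppnn (ope Shi a G).
Proof.
  intros HG. induction a as [|c0 a IH]; intros j Hj; simpl. reflexivity.
  rewrite Shi_app, HG, IH by lia. ring.
Qed.

Lemma dual a G n N : suppnn G -> (n <= Z.of_nat N)%Z ->
  ope Shi a G n = fsum (fun j => ope Sh a (En n) (Z.of_nat j) * G (Z.of_nat j)) (S N).
Proof.
  intros HG. revert n; induction a as [|c0 a IH]; intros n Hn.
  - cbn [ope]. unfold V0 at 1. symmetry. apply fsum_zero. intros i. unfold V0. ring.
  - cbn [ope]. rewrite Shi_app.
    rewrite (fsum_ext _ (fun j => c0 * (En n (Z.of_nat j) * G (Z.of_nat j)) + ope Sh a (En (n-1)) (Z.of_nat j) * G (Z.of_nat j))).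
    2:{ intros i Hi. rewrite <- Sh_En. rewrite <- (ope_T Sh) by apply linT_Sh. rewrite Sh_app. ring. }
    rewrite fsum_add, fsum_scal. rewrite fsum_delta by (auto; lia).
    rewrite <- IH by lia. reflexivity.
Qed.

Lemma ope_Sh_seq (c : nat -> C) k l F j :
  ope Sh (map c (seq k l)) F j = fsum (fun i => c (k + i)%nat * F (j + Z.of_nat i)%Z) l.
Proof.
  revert k j; induction l as [|l IH]; intros k j. reflexivity.
  cbn [map seq ope]. rewrite Sh_app, IH. rewrite fsum_front.
  rewrite Nat.add_0_r. replace (j + Z.of_nat 0)%Z with j by lia. f_equal.
  apply fsum_ext. intros i _. f_equal. f_equal. lia. f_equal. lia.
Qed.

Lemma map_conj_padd a b : map Cconj (padd a b) = padd (map Cconj a) (map Cconj b).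
Proof.
  revert b; induction a as [|x a IH]; intros b; simpl. reflexivity.
  destruct b as [|y b]; simpl. reflexivity. rewrite IH, Cplus_conj. reflexivity.
Qed.
Lemma map_conj_pscale k a : map Cconj (pscale k a) = pscale (Cconj k) (map Cconj a).
Proof. induction a as [|x a IH]; simpl. reflexivity. fold (pscale k a). rewrite IH, Cmult_conj. reflexivity. Qed.
Lemma Cconj_0 : Cconj C0 = C0.
Proof. unfold Cconj; simpl. apply injective_projections; simpl; lra. Qed.
Lemma Cconj_1 : Cconj C1 = C1.
Proof. unfold Cconj; simpl. apply injective_projections; simpl; lra. Qed.
Lemma map_conj_pmul a b : map Cconj (pmul a b) = pmul (map Cconj a) (map Cconj b).
Proof.
  induction a as [|x a IH]; simpl. reflexivity.
  rewrite map_conj_padd, map_conj_pscale. simpl. rewrite IH, Cconj_0. reflexivity.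
Qed.
Lemma map_conj_ppow a n : map Cconj (ppow a n) = ppow (map Cconj a) n.
Proof. induction n; simpl. rewrite Cconj_1. reflexivity. rewrite map_conj_pmul, IHn. reflexivity. Qed.

Lemma ope_conj a F j : (forall k, Cconj (F k) = F k) ->
  Cconj (ope Sh a F j) = ope Sh (map Cconj a) F j.
Proof.
  intros HF. revert j; induction a as [|x a IH]; intros j; simpl.
  - unfold V0. apply Cconj_0.
  - rewrite Sh_app, Cplus_conj, Cmult_conj, HF, IH. reflexivity.
Qed.

Lemma En_real n k : Cconj (En n k) = En n k.
Proof. unfold En; destruct (Z.eq_dec k n). apply Cconj_1. apply Cconj_0. Qed.

Lemma norm_Rabs (x : R) : @norm R_AbsRing R_NormedModule x = Rabs x.
Proof. reflexivity. Qed.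

Definition Cconv (u : nat -> C) (l : C) : Prop := is_lim_seq (fun K => Cmod (u K - l)) 0%R.

Lemma Cconv_unique u l1 l2 : Cconv u l1 -> Cconv u l2 -> l1 = l2.
Proof.
  intros H1 H2.
  assert (Hle : Rbar_le (Cmod (l1 - l2)) (0 + 0)%R).
  { apply (is_lim_seq_le (fun _ => Cmod (l1 - l2)) (fun K => Cmod (u K - l1) + Cmod (u K - l2))%R).
    - intros K. replace (l1 - l2) with (- (u K - l1) + (u K - l2)) by ring.
      eapply Rle_trans. apply Cmod_triangle. rewrite Cmod_opp. lra.
    - apply is_lim_seq_const.
    - apply is_lim_seq_plus'; auto. }
  simpl in Hle. pose proof (Cmod_ge_0 (l1 - l2)).
  assert (Cmod (l1 - l2) = 0%R) by lra. apply Cmod_eq_0 in H0.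
  replace l1 with ((l1 - l2) + l2) by ring. rewrite H0. ring.
Qed.

Lemma Cconv_squeeze u l (r : nat -> R) : (forall K, Cmod (u K - l) <= r K)%R -> is_lim_seq r 0%R -> Cconv u l.
Proof.
  intros Hb Hr. apply (is_lim_seq_le_le (fun _ => 0%R) _ r). intros K; split. apply Cmod_ge_0. auto.
  apply is_lim_seq_const. auto.
Qed.

Lemma Cconv_plus u v l1 l2 : Cconv u l1 -> Cconv v l2 -> Cconv (fun K => u K + v K) (l1 + l2).
Proof.
  intros H1 H2. apply (Cconv_squeeze _ _ (fun K => Cmod (u K - l1) + Cmod (v K - l2))%R).
  - intros K. replace (u K + v K - (l1 + l2)) with ((u K - l1) + (v K - l2)) by ring. apply Cmod_triangle.
  - replace 0%R with (0 + 0)%R by ring. apply is_lim_seq_plus'; auto.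
Qed.

Lemma Cconv_scal k u l : Cconv u l -> Cconv (fun K => k * u K) (k * l).
Proof.
  intros H. apply (Cconv_squeeze _ _ (fun K => Cmod k * Cmod (u K - l))%R).
  - intros K. replace (k * u K - k * l) with (k * (u K - l)) by ring. rewrite Cmod_mult. lra.
  - replace 0%R with (Cmod k * 0)%R by ring. apply (is_lim_seq_scal_l _ (Cmod k) 0%R); auto.
Qed.

Lemma Cconv_const l : Cconv (fun _ => l) l.
Proof.
  apply (Cconv_squeeze _ _ (fun _ => 0%R)). intros K. replace (l - l) with C0 by ring. rewrite Cmod_0; lra.
  apply is_lim_seq_const.
Qed.

Lemma Cconv_ext u v l : (forall K, u K = v K) -> Cconv u l -> Cconv v l.
Proof. intros H Hu. unfold Cconv. eapply is_lim_seq_ext; [|apply Hu]. intros K; simpl; rewrite H; auto. Qed.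

Lemma Cconv_fsum (u : nat -> nat -> C) (l : nat -> C) n :
  (forall i, (i < n)%nat -> Cconv (fun K => u K i) (l i)) -> Cconv (fun K => fsum (u K) n) (fsum l n).
Proof.
  induction n; intros H; simpl.
  - apply Cconv_const.
  - apply Cconv_plus. apply IHn; auto. apply H; lia.
Qed.

Lemma Cconv_conj u l : Cconv u l -> Cconv (fun K => Cconj (u K)) (Cconj l).
Proof.
  intros H. eapply Cconv_squeeze; [|apply H]. intros K. simpl.
  assert (E : Cconj (u K) - Cconj l = Cconj (u K - l)).
  { unfold Cconj, Cminus, Cplus, Copp; simpl. apply injective_projections; simpl; lra. }
  rewrite E, Cmod_conj; lra.
Qed.

Lemma sum_n_stable {G : AbelianMonoid} (a : nat -> G) N n :
  (forall k, (N < k)%nat -> a k = zero) -> (N <= n)%nat -> sum_n a n = sum_n a N.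
Proof.
  intros Ha Hn. induction Hn. reflexivity.
  rewrite sum_Sn, IHHn, Ha by lia. apply plus_zero_r.
Qed.

Lemma is_series_fin {K : AbsRing} {Vm : NormedModule K} (a : nat -> Vm) N :
  (forall k, (N < k)%nat -> a k = zero) -> is_series a (sum_n a N).
Proof.
  intros Ha. unfold is_series.
  apply (filterlim_ext_loc (fun _ => sum_n a N)).
  exists N. intros n Hn. symmetry. apply sum_n_stable; auto.
  apply filterlim_const.
Qed.

Lemma is_series_fin_unique (a : nat -> C) N l :
  (forall k, (N < k)%nat -> a k = zero) -> is_series a l -> l = sum_n a N.
Proof.
  intros Ha Hs.
  assert (H : filterlim (fun _ : nat => sum_n a N) eventually (locally l)).
  { apply (filterlim_ext_loc (sum_n a)). exists N. intros n Hn. apply sum_n_stable; auto. auto. }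
  symmetry. apply is_filter_lim_locally_unique.
  intros P HP. apply locally_locally in HP. specialize (H _ HP). destruct H as [M HM]. apply (HM M). lia.
Qed.

Lemma in_l2_add (f g : vec) : in_l2 f -> in_l2 g -> in_l2 (fun n => f n + g n).
Proof.
  intros Hf Hg. unfold in_l2 in *.
  apply (@ex_series_le R_AbsRing R_CompleteNormedModule _ (fun n => 2 * (Cmod (f n))^2 + 2 * (Cmod (g n))^2)%R).
  - intros n. rewrite norm_Rabs. rewrite Rabs_pos_eq by apply pow2_ge_0.
    pose proof (Cmod_triangle (f n) (g n)). pose proof (Cmod_ge_0 (f n + g n)).
    pose proof (Cmod_ge_0 (f n)). pose proof (Cmod_ge_0 (g n)).
    assert (Cmod (f n + g n) ^ 2 <= (Cmod (f n) + Cmod (g n)) ^ 2)%R by (apply pow_incr; lra).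
    pose proof (pow2_ge_0 (Cmod (f n) - Cmod (g n))). simpl in *. nra.
  - apply (@ex_series_ext R_AbsRing R_NormedModule (fun n => plus (scal (2:R) (Cmod (f n)^2)%R) (scal (2:R) (Cmod (g n)^2)%R))).
    intros; reflexivity.
    apply (@ex_series_plus R_AbsRing R_NormedModule); apply (@ex_series_scal_l R_AbsRing R_NormedModule); auto.
Qed.

Lemma in_l2_scal (k : C) (f : vec) : in_l2 f -> in_l2 (fun n => k * f n).
Proof.
  intros Hf. unfold in_l2 in *.
  apply (@ex_series_le R_AbsRing R_CompleteNormedModule _ (fun n => (Cmod k)^2 * (Cmod (f n))^2)%R).
  - intros n. rewrite norm_Rabs. rewrite Rabs_pos_eq by apply pow2_ge_0. rewrite Cmod_mult. rewrite Rpow_mult_distr. lra.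
  - apply (@ex_series_ext R_AbsRing R_NormedModule (fun n => scal ((Cmod k)^2)%R (Cmod (f n)^2)%R)).
    intros; reflexivity. apply (@ex_series_scal_l R_AbsRing R_NormedModule); auto.
Qed.

Lemma in_l2_ext (f g : vec) : (forall n, f n = g n) -> in_l2 f -> in_l2 g.
Proof. intros H Hf. unfold in_l2 in *. eapply ex_series_ext; [|apply Hf]. intros n; simpl; rewrite H; auto. Qed.

Lemma in_l2_sub (f g : vec) : in_l2 f -> in_l2 g -> in_l2 (vsub f g).
Proof.
  intros Hf Hg. apply (in_l2_ext (fun n => f n + (-1 * g n))).
  intros n; unfold vsub, Cminus; ring.
  apply in_l2_add; auto. apply in_l2_scal; auto.
Qed.

Lemma in_l2_shiftL (f : vec) : in_l2 f -> in_l2 (fun n => f (S n)).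
Proof. intros Hf. unfold in_l2 in *. apply ex_series_incr_1 in Hf. auto. Qed.

Lemma in_l2_shiftR (f : vec) : in_l2 f -> in_l2 (fun n => match n with O => C0 | S n' => f n' end).
Proof. intros Hf. unfold in_l2 in *. apply ex_series_incr_1. simpl. auto. Qed.

Lemma term_le_Series (a : nat -> R) n : (forall k, 0 <= a k)%R -> ex_series a -> (a n <= Series a)%R.
Proof.
  intros Hpos Hex.
  set (b := fun k => if Nat.eq_dec k n then a n else 0%R).
  assert (Hb : is_series b (sum_n b n)).
  { apply (@is_series_fin R_AbsRing R_NormedModule). intros k Hk. unfold b. destruct (Nat.eq_dec k n); [lia|]. reflexivity. }
  assert (H0 : forall j, (j < n)%nat -> sum_n b j = 0%R).
  { induction j; intros Hj. rewrite sum_O. unfold b. destruct (Nat.eq_dec 0 n); [lia|]. reflexivity.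
    rewrite sum_Sn, IHj by lia. unfold b. destruct (Nat.eq_dec (S j) n); [lia|]. change (0 + 0 = 0)%R; ring. }
  assert (Hsum : sum_n b n = a n).
  { destruct n as [|n]. rewrite sum_O. unfold b. simpl. auto.
    rewrite sum_Sn, H0 by lia. unfold b. destruct (Nat.eq_dec (S n) (S n)); [|lia]. change (0 + a (S n) = a (S n))%R; ring. }
  apply is_series_unique in Hb. rewrite Hsum in Hb. rewrite <- Hb.
  apply Series_le; auto. intros k. unfold b. destruct (Nat.eq_dec k n). subst. split; [apply Hpos|lra]. split; [lra|apply Hpos].
Qed.

Lemma comp_le_l2norm (h : vec) n : in_l2 h -> (Cmod (h n) <= l2norm h)%R.
Proof.
  intros Hh. unfold l2norm. rewrite <- (sqrt_pow2 (Cmod (h n))) by apply Cmod_ge_0.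
  apply sqrt_le_1_alt. apply (term_le_Series (fun k => Cmod (h k) ^ 2)%R). intros; apply pow2_ge_0. auto.
Qed.

Lemma l2_conv_pointwise (u : nat -> vec) (g : vec) n :
  (forall K, in_l2 (u K)) -> in_l2 g -> is_lim_seq (fun K => l2norm (vsub (u K) g)) 0%R ->
  Cconv (fun K => u K n) (g n).
Proof.
  intros Hu Hg Hl. apply (Cconv_squeeze _ _ _ (fun K => comp_le_l2norm (vsub (u K) g) n (in_l2_sub _ _ (Hu K) Hg))).
  auto.
Qed.

Lemma l2_zero_pointwise (u : nat -> vec) n :
  (forall K, in_l2 (u K)) -> is_lim_seq (fun K => l2norm (u K)) 0%R -> Cconv (fun K => u K n) 0.
Proof.
  intros Hu Hl. apply (Cconv_squeeze _ _ (fun K => l2norm (u K))); auto.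
  intros K. replace (u K n - 0) with (u K n) by ring. apply comp_le_l2norm; auto.
Qed.

Definition ext (g : vec) : V := fun j => if Z_lt_dec j 0 then C0 else g (Z.to_nat j).

Lemma ext_nat g n : ext g (Z.of_nat n) = g n.
Proof. unfold ext. destruct (Z_lt_dec _ 0). lia. rewrite Nat2Z.id. auto. Qed.

Lemma ext_supp g : suppnn (ext g).
Proof. intros j Hj. unfold ext. destruct (Z_lt_dec j 0); auto; lia. Qed.

Lemma ext_Ls g : ext (app opLs g) = Shi (ext g).
Proof.
  apply functional_extensionality; intro j. unfold ext, Shi; simpl.
  destruct (Z_lt_dec j 0); destruct (Z_lt_dec (j-1) 0); try lia; auto.
  - replace (Z.to_nat j) with O by lia. reflexivity.
  - replace (Z.to_nat j) with (S (Z.to_nat (j-1))) by lia. reflexivity.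
Qed.

Lemma ext_N f : ext (app opN f) = NZ (ext f).
Proof.
  apply functional_extensionality; intro j. unfold ext, NZ; simpl.
  destruct (Z_lt_dec j 0). ring. rewrite INR_IZR_INZ. rewrite Z2Nat.id by lia. reflexivity.
Qed.

Lemma app_powL j f n : app (op_pow opL j) f n = f (n + j)%nat.
Proof.
  revert n; induction j; intros n; simpl. rewrite Nat.add_0_r; auto.
  rewrite IHj. f_equal. lia.
Qed.

Definition pl (c : nat -> C) (m : nat) : list C := map c (seq 0 (S m)).
Definition PZ c m : V -> V := ope Sh (pl c m).
Definition pbl c m : list C := map Cconj (pl c m).
Definition PsZ c m : V -> V := ope Shi (pbl c m).

Lemma polyL_app c m f n : app (poly_L c m) f n = fsum (fun j => c j * f (n + j)%nat) (S m).
Proof.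
  cbn [app poly_L bnd_op]. rewrite sum_n_fsum. apply fsum_ext. intros i _. rewrite app_powL. reflexivity.
Qed.

Lemma PZ_agree c m h (H : V) : (forall j, (0 <= j)%Z -> ext h j = H j) ->
  forall j, (0 <= j)%Z -> ext (app (poly_L c m) h) j = PZ c m H j.
Proof.
  intros Hh j Hj. unfold PZ, pl. rewrite ope_Sh_seq.
  unfold ext at 1. destruct (Z_lt_dec j 0); [lia|]. rewrite polyL_app.
  apply fsum_ext. intros i _. simpl. f_equal. rewrite <- Hh by lia.
  rewrite <- ext_nat. f_equal. lia.
Qed.

Lemma Ppow_agree c m f k : forall j, (0 <= j)%Z ->
  ext (app (op_pow (poly_L c m) k) f) j = Nat.iter k (PZ c m) (ext f) j.
Proof.
  induction k; intros j Hj. reflexivity.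
  simpl. apply PZ_agree; auto.
Qed.

Lemma Ypow c m k f : app (op_pow (op_sub op_id (op_sub op_id (poly_L c m))) k) f = app (op_pow (poly_L c m) k) f.
Proof.
  induction k; simpl. reflexivity.
  rewrite IHk. apply functional_extensionality; intro n. unfold vsub, Cminus. ring.
Qed.

Lemma in_l2_shiftn (f : vec) l : in_l2 f -> in_l2 (fun n => f (n + l)%nat).
Proof.
  intros Hf. induction l. apply (in_l2_ext f); auto. intros n; rewrite Nat.add_0_r; auto.
  apply (in_l2_ext (fun n => f (S n + l)%nat)). intros n. f_equal. lia.
  apply (in_l2_shiftL (fun n => f (n + l)%nat)). auto.
Qed.

Lemma in_l2_polyL c m f : in_l2 f -> in_l2 (app (poly_L c m) f).
Proof.
  intros Hf. apply (in_l2_ext (fun n => fsum (fun j => c j * f (n + j)%nat) (S m))).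
  intros n; rewrite polyL_app; auto.
  generalize (S m). induction n as [|l IH]; simpl.
  - apply (in_l2_ext (fun n => C0 * f n)). intros; ring. apply in_l2_scal; auto.
  - apply in_l2_add. auto. apply in_l2_scal. apply in_l2_shiftn; auto.
Qed.

Lemma in_l2_Ppow c m f k : in_l2 f -> in_l2 (app (op_pow (poly_L c m) k) f).
Proof. intros Hf. induction k; simpl; auto. apply in_l2_polyL; auto. Qed.

Definition xi (n : nat) : vec := fun k => if Nat.eq_dec k n then C1 else C0.

Lemma ext_xi n : ext (xi n) = En (Z.of_nat n).
Proof.
  apply functional_extensionality; intro j. unfold ext, En, xi.
  destruct (Z_lt_dec j 0); destruct (Z.eq_dec j (Z.of_nat n)); try lia; auto.
  destruct (Nat.eq_dec (Z.to_nat j) n); auto; lia.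
  destruct (Nat.eq_dec (Z.to_nat j) n); auto; lia.
Qed.

Lemma in_l2_xi n : in_l2 (xi n).
Proof.
  unfold in_l2. exists (sum_n (fun k => Cmod (xi n k) ^ 2)%R n).
  apply (@is_series_fin R_AbsRing R_NormedModule). intros k Hk. unfold xi.
  destruct (Nat.eq_dec k n). lia. rewrite Cmod_0. simpl. change (0 * (0 * 1) = 0)%R. ring.
Qed.

Lemma fsum_xi n (X : nat -> C) N : (n <= N)%nat -> fsum (fun k => xi n k * X k) (S N) = X n.
Proof.
  intros H. induction H.
  - simpl. rewrite (fsum_ext _ (fun _ => C0)). rewrite fsum_zero by auto. unfold xi.
    destruct (Nat.eq_dec n n); [|lia]. ring.
    intros i Hi. unfold xi. destruct (Nat.eq_dec i n); [lia|]. ring.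
  - change (fsum (fun k => xi n k * X k) (S m) + xi n (S m) * X (S m) = X n).
    rewrite IHle. unfold xi. destruct (Nat.eq_dec (S m) n); [lia|]. ring.
Qed.

Lemma Cconj_conj x : Cconj (Cconj x) = x.
Proof. unfold Cconj; simpl. destruct x; simpl. f_equal. ring. Qed.

Lemma Cconj_fsum (f : nat -> C) n : Cconj (fsum f n) = fsum (fun k => Cconj (f k)) n.
Proof. induction n; simpl. apply Cconj_0. rewrite Cplus_conj, IHn. reflexivity. Qed.

Lemma Cconj_minus x y : Cconj (x - y) = Cconj x - Cconj y.
Proof. unfold Cconj, Cminus, Cplus, Copp; simpl. apply injective_projections; simpl; lra. Qed.

Lemma polyL_xi_zero c m n k : (n < k)%nat -> app (poly_L c m) (xi n) k = C0.
Proof.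
  intros Hk. rewrite polyL_app. apply fsum_zero. intros i. unfold xi. destruct (Nat.eq_dec (k+i) n); [lia|]. ring.
Qed.

Lemma Ys_formula c m Ys g n :
  is_adjoint (op_sub op_id (poly_L c m)) (bnd_op Ys) -> in_l2 g ->
  Ys g n = g n - PsZ c m (ext g) (Z.of_nat n).
Proof.
  intros Hadj Hg.
  destruct (Hadj (xi n) g (in_l2_xi n) Hg) as (_ & _ & _ & _ & s & H1 & H2).
  unfold inner_is in H1, H2. cbn [app op_sub op_id bnd_op] in H1, H2.
  apply is_series_fin_unique with (N := n) in H2.
  2:{ intros k Hk. unfold xi. destruct (Nat.eq_dec k n); [lia|]. change (C0 * Cconj (Ys g k) = C0). ring. }
  apply is_series_fin_unique with (N := n) in H1.
  2:{ intros k Hk. unfold vsub. rewrite polyL_xi_zero by auto. unfold xi. destruct (Nat.eq_dec k n); [lia|].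
      change ((C0 - C0) * Cconj (g k) = C0). ring. }
  rewrite sum_n_fsum in H1, H2. rewrite fsum_xi in H2 by lia.
  rewrite H2 in H1. clear H2.
  rewrite <- (Cconj_conj (Ys g n)). rewrite H1.
  rewrite Cconj_fsum.
  unfold PsZ, pbl. rewrite (dual _ _ _ n) by (apply ext_supp || lia).
  rewrite <- fsum_xi with (X := g) (N := n) by lia.
  rewrite <- (fsum_ext (fun k => xi n k * g k - ope Sh (map Cconj (pl c m)) (En (Z.of_nat n)) (Z.of_nat k) * ext g (Z.of_nat k))).
  - rewrite (fsum_ext (fun k => xi n k * g k - ope Sh (map Cconj (pl c m)) (En (Z.of_nat n)) (Z.of_nat k) * ext g (Z.of_nat k))
       (fun k => xi n k * g k + (-1) * (ope Sh (map Cconj (pl c m)) (En (Z.of_nat n)) (Z.of_nat k) * ext g (Z.of_nat k)))).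
    rewrite fsum_add, fsum_scal. ring. intros; ring.
  - intros k Hk. unfold vsub. rewrite Cmult_conj, Cconj_minus, Cconj_conj.
    rewrite <- ope_conj by apply En_real.
    rewrite <- (ext_nat (app (poly_L c m) (xi n)) k).
    rewrite (PZ_agree c m (xi n) (En (Z.of_nat n))) by first [intros; rewrite ext_xi; reflexivity | lia].
    unfold PZ. rewrite ext_nat. unfold xi. destruct (Nat.eq_dec k n); [rewrite Cconj_1|rewrite Cconj_0]; ring.
Qed.

Lemma Ysub_pow c m Ys k f :
  is_adjoint (op_sub op_id (poly_L c m)) (bnd_op Ys) -> in_l2 f ->
  in_l2 (app (op_pow (op_sub op_id (bnd_op Ys)) k) f) /\
  ext (app (op_pow (op_sub op_id (bnd_op Ys)) k) f) = Nat.iter k (PsZ c m) (ext f).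
Proof.
  intros Hadj Hf. induction k as [|k [IH1 IH2]]. split; auto.
  set (h := app (op_pow (op_sub op_id (bnd_op Ys)) k) f) in *.
  assert (HY : in_l2 (Ys h)) by (destruct (Hadj h h IH1 IH1) as (_ & _ & _ & HH & _); exact HH).
  change (app (op_pow (op_sub op_id (bnd_op Ys)) (S k)) f) with (vsub h (Ys h)).
  split. apply in_l2_sub; auto.
  change (Nat.iter (S k) (PsZ c m) (ext f)) with (PsZ c m (Nat.iter k (PsZ c m) (ext f))).
  rewrite <- IH2. apply functional_extensionality; intro j.
  destruct (Z_lt_dec j 0).
  - rewrite ext_supp by auto. unfold PsZ. rewrite ope_Shi_supp; auto. apply ext_supp.
  - replace j with (Z.of_nat (Z.to_nat j)) by lia. rewrite ext_nat. unfold vsub.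
    rewrite (Ys_formula c m Ys h) by auto. ring.
Qed.

Fixpoint Efac (alpha : nat -> C) (k : nat) (H : V) : V :=
  match k with
  | O => H
  | S k' => Vsub (Vscal (alpha k') (Shi (Efac alpha k' H))) (Efac alpha k' H)
  end.

Lemma prod_ext alpha k g : ext (app (prod_op alpha k) g) = Efac alpha k (ext g).
Proof.
  induction k; simpl. reflexivity. rewrite <- IHk.
  set (h := app (prod_op alpha k) g).
  apply functional_extensionality; intro j. unfold Vsub, Vadd, Vscal.
  destruct (Z_lt_dec j 0).
  - rewrite !ext_supp by lia. rewrite <- (equal_f (ext_Ls h)). rewrite ext_supp by lia. ring.
  - rewrite <- (equal_f (ext_Ls h)). replace j with (Z.of_nat (Z.to_nat j)) by lia.
    rewrite !ext_nat. unfold vsub, vscal. cbn [app opLs bnd_op]. ring.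
Qed.

Lemma prod_dom alpha k g : dom (prod_op alpha k) g -> in_l2 g.
Proof. induction k; simpl; auto. intros [H _]; auto. Qed.

Lemma Cconv_eq u l l' : Cconv u l -> l = l' -> Cconv u l'.
Proof. intros H E; subst; auto. Qed.

Lemma ope_vanish (T : V -> V) (t : Z -> Z) (HT : forall y j, T y j = y (t j)) b (X : nat -> V) :
  (forall j, Cconv (fun K => X K j) 0) -> forall j, Cconv (fun K => ope T b (X K) j) 0.
Proof.
  intros HX. induction b as [|c0 b IH]; intros j; simpl.
  - apply Cconv_const.
  - eapply Cconv_eq. apply Cconv_plus. apply Cconv_scal. apply HX.
    eapply Cconv_ext. intros K; rewrite (HT (ope T b (X K)) j); reflexivity. apply IH. ring.
Qed.

Lemma ShiN_PZ c m d y : ShiN d (PZ c m y) = PZ c m (ShiN d y).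
Proof. unfold PZ. apply ope_commU. apply linT_ShiN. intros; apply ShiN_Sh. Qed.

Lemma ShiN_ext d g : ShiN d (ext g) = ext (Nat.iter d (app opLs) g).
Proof.
  induction d. apply ShiN_0. rewrite <- Shi_ShiN, IHd. change (Nat.iter (S d) (app opLs) g) with (app opLs (Nat.iter d (app opLs) g)). rewrite ext_Ls. reflexivity.
Qed.

Lemma in_l2_Lsd d g : in_l2 g -> in_l2 (Nat.iter d (app opLs) g).
Proof. intros Hg; induction d; simpl; auto. apply in_l2_shiftR; auto. Qed.

Lemma Piter_vanish c m g :
  (forall f, in_l2 f -> is_lim_seq (fun k => l2norm (app (op_pow (poly_L c m) k) f)) 0%R) ->
  in_l2 g -> forall j, Cconv (fun K => Nat.iter K (PZ c m) (ext g) j) 0.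
Proof.
  intros H2 Hg j. set (d := Z.to_nat (- j)). set (h := Nat.iter d (app opLs) g).
  set (n0 := Z.to_nat (j + Z.of_nat d)).
  apply (Cconv_ext (fun K => app (op_pow (poly_L c m) K) h n0)).
  - intros K. rewrite <- ext_nat. replace (Z.of_nat n0) with (j + Z.of_nat d)%Z by (unfold n0, d; lia).
    rewrite Ppow_agree by (unfold d; lia). unfold h. rewrite <- ShiN_ext.
    rewrite <- (iter_comm (PZ c m) (ShiN d)) by apply ShiN_PZ. unfold ShiN; f_equal; lia.
  - apply (l2_zero_pointwise (fun K => app (op_pow (poly_L c m) K) h) n0). intros K; apply in_l2_Ppow, in_l2_Lsd; auto.
    apply H2. apply in_l2_Lsd; auto.
Qed.

Lemma supp_iter_Ps c m K G : suppnn G -> suppnn (Nat.iter K (PsZ c m) G).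
Proof. intros HG; induction K; simpl; auto. apply ope_Shi_supp; auto. Qed.

Lemma Psiter_vanish c m g :
  (forall f, in_l2 f -> is_lim_seq (fun k => l2norm (app (op_pow (poly_L c m) k) f)) 0%R) ->
  in_l2 g -> forall j, Cconv (fun K => Nat.iter K (PsZ c m) (ext g) j) 0.
Proof.
  intros H2 Hg j. destruct (Z_lt_dec j 0) as [l|Hj].
  - apply (Cconv_ext (fun _ => C0)). intros K. rewrite (supp_iter_Ps c m K (ext g) (ext_supp g) j l). reflexivity. apply Cconv_const.
  - set (n := Z.to_nat j). replace j with (Z.of_nat n) by lia.
    apply (Cconv_ext (fun K => fsum (fun i => ext g (Z.of_nat i) * Cconj (app (op_pow (poly_L c m) K) (xi n) i)) (S n))).
    + intros K. unfold PsZ. rewrite <- ope_ppow by apply linT_Shi.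
      rewrite (dual _ _ _ n) by (apply ext_supp || lia).
      apply fsum_ext. intros i Hi. unfold pbl. rewrite <- map_conj_ppow.
      rewrite <- ope_conj by apply En_real.
      rewrite ope_ppow by apply linT_Sh. fold (PZ c m).
      rewrite <- ext_xi. rewrite <- Ppow_agree by lia. rewrite (ext_nat (app (op_pow (poly_L c m) K) (xi n)) i).
      apply Cmult_comm.
    + eapply Cconv_eq. apply Cconv_fsum with (l := fun _ => C0).
      intros i Hi. eapply Cconv_eq. apply Cconv_scal. apply (Cconv_conj _ C0).
      apply (l2_zero_pointwise (fun K => app (op_pow (poly_L c m) K) (xi n)) i). intros K; apply in_l2_Ppow, in_l2_xi. apply H2, in_l2_xi.
      rewrite Cconj_0. ring. apply fsum_zero. auto.
Qed.

Lemma cprod_mult (u v : nat -> C) k : cprod (fun j => u j * v j) k = cprod u k * cprod v k.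
Proof. induction k; simpl. ring. rewrite IHk. ring. Qed.

Lemma cprod_zero (u : nat -> C) k j : (j < k)%nat -> u j = C0 -> cprod u k = C0.
Proof.
  induction k; intros Hj Hu. lia. simpl. destruct (Nat.eq_dec j k).
  subst. rewrite Hu. ring. rewrite IHk by (auto; lia). ring.
Qed.

Lemma cprod_conj (u : nat -> C) k : Cconj (cprod u k) = cprod (fun j => Cconj (u j)) k.
Proof. induction k; simpl. apply Cconj_1. rewrite Cmult_conj, IHk. reflexivity. Qed.

Lemma cprod_ext (u v : nat -> C) k : (forall j, u j = v j) -> cprod u k = cprod v k.
Proof. intros H; induction k; simpl; auto. rewrite IHk, H; auto. Qed.

Lemma peval_seq (c : nat -> C) k l z : peval (map c (seq k l)) z = fsum (fun i => c (k + i)%nat * pow_n z i) l.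
Proof.
  revert k; induction l; intros k. reflexivity.
  cbn [map seq peval]. rewrite IHl. rewrite fsum_front. rewrite Nat.add_0_r.
  change (pow_n z 0) with C1.
  rewrite <- fsum_scal. f_equal. ring. apply fsum_ext. intros i _.
  change (pow_n z (S i)) with (z * pow_n z i). replace (k + S i)%nat with (S k + i)%nat by lia. ring.
Qed.

Lemma peval_pl c m z : peval (pl c m) z = poly_eval c m z.
Proof. unfold pl, poly_eval. rewrite peval_seq, sum_n_fsum. reflexivity. Qed.

Lemma peval_conj a z : peval (map Cconj a) z = Cconj (peval a (Cconj z)).
Proof.
  induction a; simpl. rewrite Cconj_0; reflexivity.
  rewrite IHa, Cplus_conj, Cmult_conj, Cconj_conj. reflexivity.
Qed.

Fixpoint elist (alpha : nat -> C) (k : nat) : list C :=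
  match k with O => [C1] | S k' => pmul [Copp C1; alpha k'] (elist alpha k') end.
Fixpoint e2list (alpha : nat -> C) (k : nat) : list C :=
  match k with O => [C1] | S k' => pmul [alpha k'; Copp C1] (e2list alpha k') end.

Lemma ope_one T H : linT T -> ope T [C1] H = H.
Proof. intros HT. simpl. rewrite linT_0 by auto. apply functional_extensionality; intro j. unfold V0; ring. Qed.

Lemma elist_ope alpha k H : ope Shi (elist alpha k) H = Efac alpha k H.
Proof.
  induction k. simpl. apply functional_extensionality; intro j. unfold V0, Shi; ring.
  cbn [elist]. rewrite ope_pmul by apply linT_Shi. rewrite IHk. cbn [ope Efac].
  apply functional_extensionality; intro j. unfold Vsub, Vadd, Vscal, V0, Shi. ring.
Qed.

Lemma elist_peval alpha k z : peval (elist alpha k) z = cprod (fun j => alpha j * z - 1) k.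
Proof. induction k. simpl. ring. cbn [elist e2list cprod]. rewrite peval_pmul, IHk. simpl. ring. Qed.

Lemma e2list_peval alpha k z : peval (e2list alpha k) z = cprod (fun j => alpha j - z) k.
Proof. induction k. simpl. ring. cbn [elist e2list cprod]. rewrite peval_pmul, IHk. simpl. ring. Qed.

Lemma e2list_ope alpha k H : Efac alpha k H = ShiN k (ope Sh (e2list alpha k) H).
Proof.
  induction k.
  - simpl. apply functional_extensionality; intro j. unfold ShiN, V0, Sh. replace (j - Z.of_nat 0)%Z with j by lia. ring.
  - cbn [Efac e2list]. rewrite IHk. rewrite ope_pmul by apply linT_Sh. set (X := ope Sh (e2list alpha k) H). cbn [ope].
    apply functional_extensionality; intro j. unfold Vsub, Vadd, Vscal, V0, Shi, ShiN, Sh.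
    replace (j - 1 - Z.of_nat k)%Z with (j - Z.of_nat (S k))%Z by lia.
    replace (j - Z.of_nat (S k) + 1)%Z with (j - Z.of_nat k)%Z by lia. ring.
Qed.

Section Ident.
Variables (m : nat) (c : nat -> C) (alpha : nat -> C).
Hypothesis Hcm : c m <> RtoC 0.
Hypothesis H3 : forall z : C, Cminus (RtoC 1) (poly_eval c m z) = RtoC 0 -> Cmod z = 1%R.
Hypothesis H5 : forall z : C, Cminus (RtoC 1) (poly_eval c m z)
                 = Cmult (Copp (c m)) (cprod (fun j => Cminus z (alpha j)) m).

Lemma alpha_unit j : (j < m)%nat -> alpha j * Cconj (alpha j) = C1.
Proof.
  intros Hj. assert (Cmod (alpha j) = 1%R).
  { apply H3. rewrite H5. rewrite (cprod_zero _ m j); auto. ring. unfold Cminus. ring. }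
  rewrite <- Cmod2_conj, H. simpl. f_equal. ring.
Qed.

Definition kap := cprod alpha m / (- Cconj (c m)).
Definition mu := cprod (fun _ => -1) m / (- c m).

Lemma Cconj_neq0 : Cconj (c m) <> C0.
Proof. intros E. apply Hcm. rewrite <- (Cconj_conj (c m)), E. apply Cconj_0. Qed.

Lemma cprod_ext_lt (u v : nat -> C) k : (forall j, (j < k)%nat -> u j = v j) -> cprod u k = cprod v k.
Proof. intros H; induction k; simpl; auto. rewrite IHk, H; auto. Qed.

Lemma Cconj_opp x : Cconj (- x) = - Cconj x.
Proof. unfold Cconj, Copp; simpl. apply injective_projections; simpl; lra. Qed.

Lemma EI2 H : Efac alpha m H = Vscal kap (Vsub H (PsZ c m H)).
Proof.
  assert (Hco : forall i, nth i (elist alpha m) C0 = nth i (pscale kap (padd [C1] (pscale (-1) (pbl c m)))) C0).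
  { apply peval_coeq. intros z. rewrite elist_peval, peval_pscale, peval_padd, peval_pscale. unfold pbl.
    rewrite peval_conj, peval_pl.
    assert (E := H5 (Cconj z)). apply (f_equal Cconj) in E.
    rewrite Cconj_minus, Cconj_1, Cmult_conj, cprod_conj, Cconj_opp in E.
    rewrite (cprod_ext (fun j => Cconj (Cconj z - alpha j)) (fun j => z - Cconj (alpha j))) in E
      by (intros j; rewrite Cconj_minus, Cconj_conj; reflexivity).
    rewrite (cprod_ext_lt (fun j => alpha j * z - 1) (fun j => alpha j * (z - Cconj (alpha j))))
      by (intros j Hj; rewrite <- (alpha_unit j Hj); ring).
    rewrite cprod_mult. simpl peval.
    replace (C1 + z * 0 + -1 * Cconj (poly_eval c m (Cconj z))) with (C1 - Cconj (poly_eval c m (Cconj z))) by ring.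
    rewrite E. unfold kap. assert (Hc := Cconj_neq0). field. auto. }
  rewrite <- elist_ope, (ope_coeq _ _ _ _ linT_Shi Hco).
  rewrite ope_pscale, ope_padd, ope_one, ope_pscale by apply linT_Shi. reflexivity.
Qed.

Lemma EI1 H : Efac alpha m H = Vscal mu (ShiN m (Vsub H (PZ c m H))).
Proof.
  assert (Hco : forall i, nth i (e2list alpha m) C0 = nth i (pscale mu (padd [C1] (pscale (-1) (pl c m)))) C0).
  { apply peval_coeq. intros z. rewrite e2list_peval, peval_pscale, peval_padd, peval_pscale.
    rewrite peval_pl. simpl peval.
    replace (C1 + z * 0 + -1 * poly_eval c m z) with (1 - poly_eval c m z) by ring.
    rewrite H5. rewrite (cprod_ext (fun j => alpha j - z) (fun j => (-1) * (z - alpha j))) by (intros; ring).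
    rewrite cprod_mult. unfold mu. field. auto. }
  rewrite e2list_ope, (ope_coeq _ _ _ _ linT_Sh Hco).
  rewrite ope_pscale, ope_padd, ope_one, ope_pscale by apply linT_Sh.
  apply functional_extensionality; intro j. unfold ShiN, Vscal, Vsub, Vadd, PZ. reflexivity.
Qed.
End Ident.

Definition LP (T : V -> V) (X : V) (j : Z) (K : nat) : C :=
  fsum (fun k => match k with O => RtoC 0 | S _ => Cmult (RtoC (/ INR k)) (Nat.iter k T X j) end) (S K).

Lemma fsum_lin (a : C) (f g : nat -> C) K : a * fsum f K - fsum g K = fsum (fun i => a * f i - g i) K.
Proof. induction K; simpl. ring. rewrite <- IHK. ring. Qed.

Lemma LP_comm (T Rop : V -> V) (s : C) X j K :
  linT T -> linT Rop -> (forall y, Rop (T y) = T (Rop y)) -> (forall y, Comm T y = Vscal s (Rop y)) ->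
  RtoC (IZR j) * LP T X j K - LP T (NZ X) j K = s * fsum (fun k => Rop (Nat.iter k T X) j) K.
Proof.
  intros HT HR HRT HC. unfold LP. rewrite !fsum_front.
  replace (RtoC (IZR j) * (RtoC 0 + fsum (fun i => RtoC (/ INR (S i)) * Nat.iter (S i) T X j) K) -
     (RtoC 0 + fsum (fun i => RtoC (/ INR (S i)) * Nat.iter (S i) T (NZ X) j) K))
    with (RtoC (IZR j) * fsum (fun i => RtoC (/ INR (S i)) * Nat.iter (S i) T X j) K -
     fsum (fun i => RtoC (/ INR (S i)) * Nat.iter (S i) T (NZ X) j) K) by ring.
  rewrite fsum_lin, <- fsum_scal. apply fsum_ext. intros i _.
  pose proof (equal_f (comm_iter T Rop s i X HT HR HRT HC) j) as E.
  unfold Comm, Vsub, Vadd, Vscal, NZ in E.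
  assert (Hi : INR (S i) <> 0%R) by (apply not_0_INR; lia).
  transitivity (RtoC (/ INR (S i)) * (RtoC (IZR j) * Nat.iter (S i) T X j + -1 * Nat.iter (S i) T (fun j0 => RtoC (IZR j0) * X j0) j)).
  unfold NZ. ring. rewrite E. rewrite RtoC_inv. field. intro E'. apply RtoC_inj in E'. auto. auto.
Qed.

Lemma fsum_tele (y : nat -> C) K : fsum (fun k => y k - y (S k)) K = y O - y K.
Proof. induction K; simpl. ring. rewrite IHK. ring. Qed.

Definition RZ c m : V -> V := ope Sh (zd (pl c m)).
Definition RsZ c m : V -> V := ope Shi (zd (pbl c m)).

Section Core.
Variables (m : nat) (c : nat -> C) (alpha : nat -> C).
Hypothesis Hcm : c m <> RtoC 0.
Hypothesis H3 : forall z : C, Cminus (RtoC 1) (poly_eval c m z) = RtoC 0 -> Cmod z = 1%R.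
Hypothesis H5 : forall z : C, Cminus (RtoC 1) (poly_eval c m z)
                 = Cmult (Copp (c m)) (cprod (fun j => Cminus z (alpha j)) m).

Lemma key_ident G j :
  kap m c alpha * RsZ c m G j + mu m c * RZ c m G (j - Z.of_nat m)%Z = - RtoC (INR m) * Efac alpha m G j.
Proof.
  set (k := kap m c alpha). set (u := mu m c).
  assert (cS := equal_f (comm_ope_Shi (pbl c m) G) j).
  assert (cP := equal_f (comm_ope_Sh (pl c m) G) (j - Z.of_nat m)%Z).
  unfold Comm, Vsub, Vadd, Vscal, NZ in cS, cP. fold (RsZ c m) in cS. fold (RZ c m) in cP.
  fold (PsZ c m) in cS. fold (PZ c m) in cP.
  assert (E1 : Efac alpha m G j = k * (G j - PsZ c m G j)).
  { rewrite (EI2 m c alpha Hcm H3 H5). unfold Vsub, Vadd, Vscal. fold k. ring. }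
  assert (E2 : Efac alpha m (NZ G) j = k * (RtoC (IZR j) * G j - PsZ c m (NZ G) j)).
  { rewrite (EI2 m c alpha Hcm H3 H5). unfold Vsub, Vadd, Vscal. fold k. unfold NZ at 1. ring. }
  assert (E3 : Efac alpha m G j = u * (G (j - Z.of_nat m)%Z - PZ c m G (j - Z.of_nat m)%Z)).
  { rewrite (EI1 m c alpha Hcm H5). unfold Vsub, Vadd, Vscal, ShiN. fold u. ring. }
  assert (E4 : Efac alpha m (NZ G) j = u * (RtoC (IZR (j - Z.of_nat m)) * G (j - Z.of_nat m)%Z - PZ c m (NZ G) (j - Z.of_nat m)%Z)).
  { rewrite (EI1 m c alpha Hcm H5). unfold Vsub, Vadd, Vscal, ShiN. fold u. unfold NZ at 1. ring. }
  unfold NZ in *.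
  rewrite <- cS.
  replace (RZ c m G (j - Z.of_nat m)%Z) with (- (-1 * RZ c m G (j - Z.of_nat m)%Z)) by ring.
  rewrite <- cP.
  transitivity (- RtoC (IZR j) * (k * (G j - PsZ c m G j))
     + k * (RtoC (IZR j) * G j - PsZ c m (fun j0 => RtoC (IZR j0) * G j0) j)
     + RtoC (IZR (j - Z.of_nat m)) * (u * (G (j - Z.of_nat m)%Z - PZ c m G (j - Z.of_nat m)%Z))
     - u * (RtoC (IZR (j - Z.of_nat m)) * G (j - Z.of_nat m)%Z - PZ c m (fun j0 => RtoC (IZR j0) * G j0) (j - Z.of_nat m)%Z)).
  ring.
  rewrite <- E1, <- E2, <- E3, <- E4.
  rewrite minus_IZR, <- INR_IZR_INZ. unfold Rminus. rewrite RtoC_plus, RtoC_opp. ring.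
Qed.
End Core.

Lemma lin_vsub (T : V -> V) a x y : linT T -> T (Vscal a (Vsub x y)) = Vscal a (Vsub (T x) (T y)).
Proof. intros [HA HS]. unfold Vsub. rewrite HS, HA, HS. reflexivity. Qed.

Lemma Vscal_1 x : Vscal 1 x = x.
Proof. apply functional_extensionality; intro j; unfold Vscal; ring. Qed.

Section Core2.
Variables (m : nat) (c : nat -> C) (alpha : nat -> C).
Hypothesis Hcm : c m <> RtoC 0.
Hypothesis H3 : forall z : C, Cminus (RtoC 1) (poly_eval c m z) = RtoC 0 -> Cmod z = 1%R.
Hypothesis H5 : forall z : C, Cminus (RtoC 1) (poly_eval c m z)
                 = Cmult (Copp (c m)) (cprod (fun j => Cminus z (alpha j)) m).
Hypothesis H2 : forall f, in_l2 f -> is_lim_seq (fun k => l2norm (app (op_pow (poly_L c m) k) f)) 0%R.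

Lemma linPs : linT (PsZ c m). Proof. apply linT_ope, linT_Shi. Qed.
Lemma linP : linT (PZ c m). Proof. apply linT_ope, linT_Sh. Qed.
Lemma linRs : linT (RsZ c m). Proof. apply linT_ope, linT_Shi. Qed.
Lemma linR : linT (RZ c m). Proof. apply linT_ope, linT_Sh. Qed.

Lemma core g (Hg : in_l2 g) (n : nat) :
  Cconv (fun K => RtoC (IZR (Z.of_nat n)) * (LP (PsZ c m) (Efac alpha m (ext g)) (Z.of_nat n) K - LP (PZ c m) (Efac alpha m (ext g)) (Z.of_nat n) K)
        - (LP (PsZ c m) (NZ (Efac alpha m (ext g))) (Z.of_nat n) K - LP (PZ c m) (NZ (Efac alpha m (ext g))) (Z.of_nat n) K))
   (- RtoC (INR m) * Efac alpha m (ext g) (Z.of_nat n)).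
Proof.
  set (F := Efac alpha m (ext g)). set (j := Z.of_nat n). set (G := ext g).
  set (k := kap m c alpha). set (u := mu m c).
  assert (LS : forall K, RtoC (IZR j) * LP (PsZ c m) F j K - LP (PsZ c m) (NZ F) j K
              = 1 * fsum (fun i => RsZ c m (Nat.iter i (PsZ c m) F) j) K).
  { intros K. apply LP_comm. apply linPs. apply linRs. intros; apply ope_comm, linT_Shi.
    intros y. rewrite Vscal_1. apply comm_ope_Shi. }
  assert (LPz : forall K, RtoC (IZR j) * LP (PZ c m) F j K - LP (PZ c m) (NZ F) j K
              = -1 * fsum (fun i => RZ c m (Nat.iter i (PZ c m) F) j) K).
  { intros K. apply LP_comm. apply linP. apply linR. intros; apply ope_comm, linT_Sh.
    intros y. apply comm_ope_Sh. }
  assert (TS : forall K, fsum (fun i => RsZ c m (Nat.iter i (PsZ c m) F) j) K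
       = k * (RsZ c m G j - RsZ c m (Nat.iter K (PsZ c m) G) j)).
  { intros K. unfold F. rewrite (EI2 m c alpha Hcm H3 H5). fold G k.
    rewrite (fsum_ext _ (fun i => k * (RsZ c m (Nat.iter i (PsZ c m) G) j - RsZ c m (Nat.iter (S i) (PsZ c m) G) j))).
    rewrite fsum_scal, fsum_tele. reflexivity.
    intros i _. rewrite lin_vsub by apply linT_iter, linPs.
    rewrite <- (iter_comm (PsZ c m) (PsZ c m) i G) by reflexivity.
    change (Nat.iter (S i) (PsZ c m) G) with (PsZ c m (Nat.iter i (PsZ c m) G)).
    rewrite lin_vsub by apply linRs. unfold Vsub, Vadd, Vscal. ring. }
  assert (TP : forall K, fsum (fun i => RZ c m (Nat.iter i (PZ c m) F) j) K
       = u * (RZ c m G (j - Z.of_nat m)%Z - RZ c m (Nat.iter K (PZ c m) G) (j - Z.of_nat m)%Z)).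
  { intros K. unfold F. rewrite (EI1 m c alpha Hcm H5). fold G u.
    rewrite (fsum_ext _ (fun i => u * (RZ c m (Nat.iter i (PZ c m) G) (j - Z.of_nat m)%Z - RZ c m (Nat.iter (S i) (PZ c m) G) (j - Z.of_nat m)%Z))).
    rewrite fsum_scal, fsum_tele. reflexivity.
    intros i _. destruct (linT_iter (PZ c m) i linP) as [_ HS]. rewrite HS.
    rewrite <- (iter_comm (PZ c m) (ShiN m)) by apply ShiN_PZ.
    destruct linR as [_ HRS]. rewrite HRS.
    unfold RZ. rewrite <- (ope_commU Sh (ShiN m)) by (apply linT_ShiN || apply ShiN_Sh).
    fold (RZ c m).
    assert (Hit : Nat.iter i (PZ c m) (Vsub G (PZ c m G)) = Vsub (Nat.iter i (PZ c m) G) (Nat.iter (S i) (PZ c m) G)).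
    { rewrite <- (Vscal_1 (Vsub G (PZ c m G))). rewrite lin_vsub by apply linT_iter, linP. rewrite Vscal_1.
      rewrite <- (iter_comm (PZ c m) (PZ c m) i G) by reflexivity. reflexivity. }
    rewrite Hit. rewrite <- (Vscal_1 (Vsub _ _)). rewrite lin_vsub by apply linR.
    unfold Vsub, Vadd, Vscal, ShiN. ring. }
  apply (Cconv_ext (fun K => (k * RsZ c m G j + u * RZ c m G (j - Z.of_nat m)%Z) +
           ((- k) * RsZ c m (Nat.iter K (PsZ c m) G) j + (- u) * RZ c m (Nat.iter K (PZ c m) G) (j - Z.of_nat m)%Z))).
  - intros K.
    replace (RtoC (IZR j) * (LP (PsZ c m) F j K - LP (PZ c m) F j K) - (LP (PsZ c m) (NZ F) j K - LP (PZ c m) (NZ F) j K))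
      with ((RtoC (IZR j) * LP (PsZ c m) F j K - LP (PsZ c m) (NZ F) j K) - (RtoC (IZR j) * LP (PZ c m) F j K - LP (PZ c m) (NZ F) j K)) by ring.
    rewrite LS, LPz, TS, TP. ring.
  - eapply Cconv_eq. apply Cconv_plus. apply Cconv_const. apply Cconv_plus; apply Cconv_scal.
    + apply (ope_vanish Shi (fun x => (x - 1)%Z) (fun _ _ => eq_refl)). apply Psiter_vanish; auto.
    + apply (ope_vanish Sh (fun x => (x + 1)%Z) (fun _ _ => eq_refl)). apply Piter_vanish; auto.
    + unfold k, u. rewrite key_ident; auto. unfold F, G. ring.
Qed.
End Core2.


Lemma logconv A h n : log_dom A h -> Cconv (fun K => log_partial A h K n) (log_val A h n).
Proof.
  intros [_ Hex]. 
  assert (Hv : l2_lim (log_partial A h) (log_val A h)).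
  { unfold log_val. apply epsilon_spec. auto. }
  destruct Hv as (Hg & Hu & Hl). apply l2_conv_pointwise; auto.
Qed.

Lemma LPY c m h K n :
  log_partial (op_sub op_id (poly_L c m)) h K n = LP (PZ c m) (ext h) (Z.of_nat n) K.
Proof.
  unfold log_partial, LP. rewrite sum_n_fsum. apply fsum_ext. intros k _. destruct k. reflexivity.
  rewrite Ypow. rewrite <- (Ppow_agree c m h (S k) (Z.of_nat n)) by lia. rewrite ext_nat. reflexivity.
Qed.

Lemma LPYs c m Ys h K n :
  is_adjoint (op_sub op_id (poly_L c m)) (bnd_op Ys) -> in_l2 h ->
  log_partial (bnd_op Ys) h K n = LP (PsZ c m) (ext h) (Z.of_nat n) K.
Proof.
  intros Hadj Hh. unfold log_partial, LP. rewrite sum_n_fsum. apply fsum_ext. intros k _. destruct k. reflexivity.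
  destruct (Ysub_pow c m Ys (S k) h Hadj Hh) as [_ E]. rewrite <- E. rewrite ext_nat. reflexivity.
Qed.

Theorem mainTheorem15
  (m : nat) (c : nat -> C) (alpha : nat -> C) (Ys : vec -> vec) :
  (1 <= m)%nat ->
  c m <> RtoC 0 ->
  (forall f g, in_l2 f -> in_l2 g ->
     app (op_sub op_id (poly_L c m)) f = app (op_sub op_id (poly_L c m)) g -> f = g) ->
  (forall f, in_l2 f ->
     is_lim_seq (fun k => l2norm (app (op_pow (poly_L c m) k) f)) 0) ->
  (forall z : C, Cminus (RtoC 1) (poly_eval c m z) = RtoC 0 -> Cmod z = 1%R) ->
  (forall z : C, Cminus (RtoC 1) (poly_eval c m z)
                 = Cmult (Copp (c m)) (cprod (fun j => Cminus z (alpha j)) m)) ->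
  is_adjoint (op_sub op_id (poly_L c m)) (bnd_op Ys) ->
  let Yp := op_sub op_id (poly_L c m) in
  let Xp := opX Yp (bnd_op Ys) in
  comm_on opN (op_scal (Cdiv Ci (RtoC (INR m))) Xp) (op_scal (Copp Ci) op_id)
    (fun f => ran (prod_op alpha m) f /\ dom (op_comp Xp opN) f
              /\ dom (op_comp opN Xp) f).
Proof.
  intros Hm Hcm _ H2 H3 H5 Hadj Yp Xp.
  set (k := Cdiv Ci (RtoC (INR m))).
  split.
  - intros f (Hran & HXN & HNX). split.
    + destruct HNX as [HX [HN1 HN2]]. split. exact HX. split.
      apply in_l2_scal; auto. simpl.
      apply (in_l2_ext (fun n => k * (RtoC (INR n) * app Xp f n))). intros n; simpl; unfold vscal; ring.
      apply in_l2_scal; auto.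
    + exact HXN.
  - intros f (Hran & HXN & HNX).
    destruct Hran as [g [Hgd Hgf]]. assert (Hg := prod_dom _ _ _ Hgd).
    assert (HF : ext f = Efac alpha m (ext g)) by (rewrite <- Hgf; apply prod_ext).
    destruct HXN as [[Hf HNf] [HXa HXb]]. destruct HNX as [[HX1 HX2] _].
    assert (Key : forall n, RtoC (INR n) * app Xp f n - app Xp (app opN f) n = - RtoC (INR m) * f n).
    { intros n.
      assert (C1' := logconv Yp f n HX1). assert (C2' := logconv (bnd_op Ys) f n HX2).
      assert (C3' := logconv Yp (app opN f) n HXa). assert (C4' := logconv (bnd_op Ys) (app opN f) n HXb).
      assert (Hc := core m c alpha Hcm H3 H5 H2 g Hg n).
      rewrite <- HF in Hc. rewrite <- ext_N in Hc. rewrite ext_nat in Hc.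
      symmetry. apply (Cconv_unique _ _ _ Hc).
      assert (HX : Cconv (fun K => RtoC (INR n) * (log_partial (bnd_op Ys) f K n + -1 * log_partial Yp f K n)
             + -1 * (log_partial (bnd_op Ys) (app opN f) K n + -1 * log_partial Yp (app opN f) K n))
           (RtoC (INR n) * (log_val (bnd_op Ys) f n + -1 * log_val Yp f n)
             + -1 * (log_val (bnd_op Ys) (app opN f) n + -1 * log_val Yp (app opN f) n))).
      { apply Cconv_plus. apply Cconv_scal. apply Cconv_plus. exact C2'. apply Cconv_scal. exact C1'.
        apply Cconv_scal. apply Cconv_plus. exact C4'. apply Cconv_scal. exact C3'. }
      apply Cconv_eq with (l := RtoC (INR n) * (log_val (bnd_op Ys) f n + -1 * log_val Yp f n)
             + -1 * (log_val (bnd_op Ys) (app opN f) n + -1 * log_val Yp (app opN f) n)).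
      + eapply Cconv_ext; [|exact HX]. intros K. simpl. unfold Yp. rewrite !LPY, !(LPYs c m Ys); auto. rewrite INR_IZR_INZ. ring.
      + simpl. unfold vsub, vscal. ring. }
    apply functional_extensionality; intro n. simpl. unfold vsub, vscal.
    specialize (Key n).
    assert (Hm0 : RtoC (INR m) <> RtoC 0). { intro E. apply RtoC_inj in E. apply (not_0_INR m); [lia|auto]. }
    transitivity (k * (RtoC (INR n) * app Xp f n - app Xp (app opN f) n)). unfold Xp, opX; simpl. unfold vsub, vscal. ring.
    rewrite Key. unfold k. field. auto.
Qed.
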